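(* Let $G$ be an infinite non-abelian soluble periodic group. Then $G\in\mathfrak{Y}_n$ if and only if $G$ splits as a semidirect product $G=\langle x\rangle\ltimes A$, where $\langle x\rangle$ is a finite $p$-group for some prime $p$, $A$ is an abelian $p'$-group (every element has order coprime to $p$), $x^p$ acts trivially on $A$, and $\partial_x$ has property $\mathbb{I}$.
   Context: $\mathfrak{Y}_n$ denotes the class of all groups $G$ (finite or infinite) such that $N_G(A)=A$ for every non-abelian subgroup $A\le G$. If an element $x$ acts on an abelian group $A$, $\partial_x\colon A\to A$ is the endomorphism $\partial_x(a)=a^{1-x}=a\,(a^x)^{-1}$. We say $\partial_x$ has property $\mathbb{I}$ if for every subgroup $B\le A$ with $\partial_x(B)\le B$ one has $\partial_x(B)=B$. *)

(* Defs.v *)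
From Stdlib Require Import List.
From mathcomp Require Import all_boot.
Set Implicit Arguments. Unset Strict Implicit.

Record group := Group {
  carrier :> Type;
  gmul : carrier -> carrier -> carrier;
  ginv : carrier -> carrier;
  gone : carrier;
  gmulA : forall x y z, gmul x (gmul y z) = gmul (gmul x y) z;
  gmul1 : forall x, gmul gone x = x;
  gmulV : forall x, gmul (ginv x) x = gone
}.

Section Defs.
Variable G : group.

Fixpoint gpow (x : G) (n : nat) : G :=
  match n with O => (gone G) | S m => gmul x (gpow x m) end.

Definition gconj (x g : G) : G := gmul (ginv g) (gmul x g).
Definition gcomm (x y : G) : G := gmul (ginv x) (gconj x y).

Definition subgroup (H : G -> Prop) : Prop :=
  H (gone G) /\ (forall x y, H x -> H y -> H (gmul x y)) /\ (forall x, H x -> H (ginv x)).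

Definition abelian_set (H : G -> Prop) : Prop :=
  forall x y, H x -> H y -> gmul x y = gmul y x.

Definition gen (S : G -> Prop) : G -> Prop :=
  fun x => forall K, subgroup K -> (forall y, S y -> K y) -> K x.

Definition cyclic_sub (x : G) : G -> Prop := gen (fun y => y = x).

Definition normalizes (g : G) (H : G -> Prop) : Prop :=
  forall a, H a <-> H (gconj a g).

Definition normal_sub (H : G -> Prop) : Prop :=
  subgroup H /\ forall g, normalizes g H.

Definition finite_set (H : G -> Prop) : Prop :=
  exists l : list G, forall x, H x -> In x l.

Definition infinite_group : Prop := ~ finite_set (fun _ => True).

Definition periodic : Prop := forall g : G, exists n, 0 < n /\ gpow g n = gone G.

Fixpoint derived (n : nat) : G -> Prop :=
  match n with
  | O => fun _ => True
  | S m => gen (fun z => exists a b, derived m a /\ derived m b /\ z = gcomm a b)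
  end.

Definition soluble : Prop := exists n, forall x, derived n x -> x = gone G.

Definition in_Yn : Prop :=
  forall A, subgroup A -> ~ abelian_set A -> forall g, normalizes g A -> A g.

Definition finite_p_sub (p : nat) (H : G -> Prop) : Prop :=
  finite_set H /\ forall h, H h -> exists k, gpow h (p ^ k) = gone G.

Definition p'_sub (p : nat) (H : G -> Prop) : Prop :=
  forall a, H a -> exists n, 0 < n /\ coprime n p /\ gpow a n = gone G.

(* partial_x (a) = a^{1-x} = a (a^x)^{-1} *)
Definition dpartial (x a : G) : G := gmul a (ginv (gconj a x)).

Definition property_I (x : G) (A : G -> Prop) : Prop :=
  forall B, subgroup B -> (forall b, B b -> A b) ->
    (forall b, B b -> B (dpartial x b)) ->
    (forall b, B b -> exists c, B c /\ dpartial x c = b).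

End Defs.

(* Main.v *)
From Stdlib Require Import Classical ClassicalEpsilon List.
Require Import Defs.
From mathcomp Require Import all_boot zify.
Set Implicit Arguments. Unset Strict Implicit.

Section Basic.
Variable G : group.
Local Notation "x · y" := (@gmul G x y) (at level 40, left associativity).
Local Notation inv := (@ginv G).
Local Notation one := (@gone G).
Local Notation gpow := (@gpow G).
Local Notation gconj := (@gconj G).

Lemma mulA (x y z : G) : x · (y · z) = x · y · z. Proof. exact: gmulA. Qed.
Lemma mul1 (x : G) : one · x = x. Proof. exact: gmul1. Qed.
Lemma mulVx (x : G) : inv x · x = one. Proof. exact: gmulV. Qed.

Lemma mulxV (x : G) : x · inv x = one.
Proof.
have h : (x · inv x) · (x · inv x) = x · inv x.
  by rewrite -mulA (mulA (inv x) x (inv x)) mulVx mul1.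
by rewrite -[LHS]mul1 -(mulVx (x · inv x)) -mulA h.
Qed.

Lemma mul1r (x : G) : x · one = x.
Proof. by rewrite -(mulVx x) mulA mulxV mul1. Qed.

Lemma mulKV (x y : G) : inv x · (x · y) = y.
Proof. by rewrite mulA mulVx mul1. Qed.
Lemma mulVK (x y : G) : x · (inv x · y) = y.
Proof. by rewrite mulA mulxV mul1. Qed.
Lemma mulKr (x y : G) : x · y · inv y = x.
Proof. by rewrite -mulA mulxV mul1r. Qed.
Lemma mulVr (x y : G) : x · inv y · y = x.
Proof. by rewrite -mulA mulVx mul1r. Qed.

Lemma mulIl (x y z : G) : x · y = x · z -> y = z.
Proof. by move=> h; rewrite -(mulKV x y) h mulKV. Qed.
Lemma mulIr (x y z : G) : y · x = z · x -> y = z.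
Proof. by move=> h; rewrite -(mulKr y x) h mulKr. Qed.

Lemma inv_uniq (x y : G) : x · y = one -> y = inv x.
Proof. by move=> h; apply: (@mulIl x); rewrite h mulxV. Qed.
Lemma invK (x : G) : inv (inv x) = x.
Proof. by symmetry; apply: inv_uniq; rewrite mulVx. Qed.
Lemma invM (x y : G) : inv (x · y) = inv y · inv x.
Proof. by symmetry; apply: inv_uniq; rewrite mulA mulKr mulxV. Qed.
Lemma inv1 : inv one = one.
Proof. by symmetry; apply: inv_uniq; rewrite mul1. Qed.
Lemma inv_eq1 (x : G) : inv x = one -> x = one.
Proof. by move=> h; rewrite -(invK x) h inv1. Qed.

Lemma eq_mulV (x y : G) : x · inv y = one -> x = y.
Proof. by move=> h; rewrite -(mulVr x y) h mul1. Qed.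

Lemma conjE (a g : G) : gconj a g = inv g · (a · g). Proof. by []. Qed.
Lemma conjM (a b g : G) : gconj (a · b) g = gconj a g · gconj b g.
Proof. by rewrite !conjE !mulA mulKr -!mulA. Qed.
Lemma conj1 (g : G) : gconj one g = one.
Proof. by rewrite conjE mul1 mulVx. Qed.
Lemma conjg1 (a : G) : gconj a one = a.
Proof. by rewrite conjE inv1 mul1 mul1r. Qed.
Lemma conjV (a g : G) : gconj (inv a) g = inv (gconj a g).
Proof. by rewrite !conjE !invM invK mulA. Qed.
Lemma conjJ (a g h : G) : gconj (gconj a g) h = gconj a (g · h).
Proof. by rewrite !conjE invM !mulA. Qed.
Lemma conjK (a g : G) : gconj (gconj a g) (inv g) = a.
Proof. by rewrite conjJ mulxV conjg1. Qed.
Lemma conjKV (a g : G) : gconj (gconj a (inv g)) g = a.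
Proof. by rewrite conjJ mulVx conjg1. Qed.
Lemma conj_comm (a g : G) : a · g = g · a -> gconj a g = a.
Proof. by move=> h; rewrite conjE h mulKV. Qed.
Lemma comm_conj (a g : G) : gconj a g = a -> a · g = g · a.
Proof. by rewrite conjE => h; rewrite -{2}h mulVK. Qed.
Lemma conj_inj (a b g : G) : gconj a g = gconj b g -> a = b.
Proof. by move=> h; rewrite -(conjK a g) h conjK. Qed.
Lemma mul_conj (a g : G) : g · gconj a g = a · g.
Proof. by rewrite conjE mulVK. Qed.

Lemma gpowS (x : G) n : gpow x n.+1 = x · gpow x n. Proof. by []. Qed.
Lemma gpow0 (x : G) : gpow x 0 = one. Proof. by []. Qed.
Lemma gpow1 (x : G) : gpow x 1 = x. Proof. by rewrite gpowS mul1r. Qed.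
Lemma gpowD (x : G) m n : gpow x (m + n) = gpow x m · gpow x n.
Proof. by elim: m => [|m IH]; rewrite ?mul1 // addSn !gpowS IH mulA. Qed.
Lemma gpowSr (x : G) n : gpow x n.+1 = gpow x n · x.
Proof. by rewrite -addn1 gpowD gpow1. Qed.
Lemma gpowM (x : G) m n : gpow x (m * n) = gpow (gpow x m) n.
Proof. by elim: n => [|n IH]; rewrite ?muln0 // mulnS gpowD IH gpowS. Qed.
Lemma gpow_one n : gpow one n = one.
Proof. by elim: n => // n IH; rewrite gpowS IH mul1. Qed.
Lemma gpow_comm (x : G) m n : gpow x m · gpow x n = gpow x n · gpow x m.
Proof. by rewrite -!gpowD addnC. Qed.
Lemma gpow_commx (x : G) n : x · gpow x n = gpow x n · x.
Proof. by rewrite -gpowS gpowSr. Qed.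
Lemma comm_pow (x y : G) n : x · y = y · x -> gpow x n · y = y · gpow x n.
Proof.
move=> h; elim: n => [|n IH]; first by rewrite mul1 mul1r.
by rewrite gpowS -mulA IH mulA h -mulA.
Qed.
Lemma gpowMc (x y : G) n : x · y = y · x -> gpow (x · y) n = gpow x n · gpow y n.
Proof.
move=> h; elim: n => [|n IH]; first by rewrite mul1.
rewrite !gpowS IH -!mulA; congr (_ · _); rewrite !mulA; congr (_ · _).
by symmetry; apply: comm_pow.
Qed.
Lemma conj_pow (x g : G) n : gconj (gpow x n) g = gpow (gconj x g) n.
Proof. by elim: n => [|n IH]; rewrite ?conj1 // !gpowS conjM IH. Qed.
Lemma gpow_inv (x : G) n : gpow (inv x) n = inv (gpow x n).
Proof.
elim: n => [|n IH]; first by rewrite inv1.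
by rewrite gpowS IH gpowSr invM.
Qed.

Definition commute (x y : G) := x · y = y · x.
End Basic.

Section Sub.
Variable G : group.
Local Notation "x · y" := (@gmul G x y) (at level 40, left associativity).
Local Notation inv := (@ginv G).
Local Notation one := (@gone G).
Local Notation gpow := (@gpow G).
Local Notation gconj := (@gconj G).

Lemma sub1 (H : G -> Prop) : subgroup H -> H one. Proof. by case. Qed.
Lemma subM (H : G -> Prop) x y : subgroup H -> H x -> H y -> H (x · y).
Proof. by case=> _ [h _]; apply: h. Qed.
Lemma subV (H : G -> Prop) x : subgroup H -> H x -> H (inv x).
Proof. by case=> _ [_ h]; apply: h. Qed.
Lemma subP (H : G -> Prop) x n : subgroup H -> H x -> H (gpow x n).
Proof. by move=> sH Hx; elim: n => [|n IH]; [apply: sub1|apply: subM]. Qed.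
Lemma subJ (H : G -> Prop) x g : subgroup H -> H x -> H g -> H (gconj x g).
Proof. by move=> sH Hx Hg; rewrite conjE; apply: subM => //; [apply: subV|apply: subM]. Qed.
Lemma subMl (H : G -> Prop) x y : subgroup H -> H x -> H (x · y) -> H y.
Proof. by move=> sH Hx Hxy; rewrite -(mulKV x y); apply: subM => //; apply: subV. Qed.
Lemma subMr (H : G -> Prop) x y : subgroup H -> H y -> H (x · y) -> H x.
Proof. by move=> sH Hy Hxy; rewrite -(mulKr x y); apply: subM => //; apply: subV. Qed.

Lemma gen_sub (S : G -> Prop) : subgroup (gen S).
Proof.
split; first by move=> K [? _].
split; first by move=> x y hx hy K sK hS; apply: subM => //; [apply: hx|apply: hy].
by move=> x hx K sK hS; apply: subV => //; apply: hx.
Qed.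
Lemma gen_in (S : G -> Prop) y : S y -> gen S y.
Proof. by move=> h K _ hS; apply: hS. Qed.
Lemma gen_min (S K : G -> Prop) : subgroup K -> (forall y, S y -> K y) ->
  forall y, gen S y -> K y.
Proof. by move=> sK hS y hy; apply: hy. Qed.

Lemma norm_fwd (H : G -> Prop) g :
  (forall a, H a -> H (gconj a g)) -> (forall a, H a -> H (gconj a (inv g))) ->
  normalizes g H.
Proof.
move=> h1 h2 a; split; first exact: h1.
by move=> h; rewrite -(conjK a g); apply: h2.
Qed.
Lemma norm_mem (H : G -> Prop) g : subgroup H -> H g -> normalizes g H.
Proof.
move=> sH Hg; apply: norm_fwd => a Ha; apply: subJ => //; exact: subV.
Qed.
Lemma norm_mul (H : G -> Prop) g h : normalizes g H -> normalizes h H ->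
  normalizes (g · h) H.
Proof. by move=> ng nh a; rewrite -conjJ; exact: (iff_trans (ng a) (nh _)). Qed.
Lemma norm_inv (H : G -> Prop) g : normalizes g H -> normalizes (inv g) H.
Proof. by move=> ng a; rewrite -{1}(conjKV a g) -ng. Qed.
Lemma norm_fwdE (H : G -> Prop) g a : normalizes g H -> H a -> H (gconj a g).
Proof. by move=> ng; case: (ng a). Qed.

Lemma central_in (z : G) : (forall h : G, z · h = h · z) ->
  in_Yn G -> forall H, subgroup H -> ~ abelian_set H -> H z.
Proof.
move=> cz Y H sH nab; apply: Y => // a.
by rewrite conj_comm //; symmetry; apply: cz.
Qed.

Lemma gpow_coprime (c : G) n m : 0 < n -> coprime n m ->
  gpow c n = one -> gpow c m = one -> c = one.
Proof.
move=> n0 /(coprimeP _ n0) [[u v] /= huv] hn hm.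
have e : u * n = v * m + 1 by lia.
have : gpow c (u * n) = gpow c (v * m + 1) by rewrite e.
by rewrite gpowD gpow1 mulnC gpowM hn gpow_one mulnC gpowM hm gpow_one mul1.
Qed.

Section Per.
Hypothesis Hper : periodic G.

Lemma inv_pow (x : G) : exists n, inv x = gpow x n.
Proof.
have [N [N0 hN]] := Hper x; exists N.-1.
apply: (@mulIl _ x); rewrite mulxV -gpowS prednK //.
Qed.

Lemma subgroupP (H : G -> Prop) : H one -> (forall x y, H x -> H y -> H (x · y)) ->
  subgroup H.
Proof.
move=> h1 hM; split => //; split => // x hx.
have [n ->] := inv_pow x; elim: n => [|n IH] //; exact: hM.
Qed.

Lemma cyclicP (x c : G) : cyclic_sub x c <-> exists n, c = gpow x n.
Proof.
split.
  move=> h; apply: (gen_min (K := fun c => exists n, c = gpow x n) _ _ h).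
    apply: subgroupP; first by exists 0.
    by move=> a b [m ->] [n ->]; exists (m + n); rewrite gpowD.
  by move=> y ->; exists 1; rewrite gpow1.
move=> [n ->]; apply: (subP _ (gen_sub _)); exact: gen_in.
Qed.
End Per.
End Sub.

Section Abel.
Variable G : group.
Local Notation "x · y" := (@gmul G x y) (at level 40, left associativity).
Local Notation inv := (@ginv G).
Local Notation one := (@gone G).
Local Notation gpow := (@gpow G).
Local Notation gconj := (@gconj G).

Variables (A : G -> Prop) (x : G).
Hypotheses (sA : subgroup A) (abA : abelian_set A)
  (xA : forall a, A a -> A (gconj a x)).

Lemma dpA a : A a -> A (dpartial x a).
Proof. by move=> Aa; apply: subM => //; apply: subV => //; apply: xA. Qed.

Lemma dpM a b : A a -> A b -> dpartial x (a · b) = dpartial x a · dpartial x b.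
Proof.
move=> Aa Ab; rewrite /dpartial conjM invM -!mulA; congr (gmul a _).
rewrite mulA; apply: abA; [exact: dpA| apply: subV => //; exact: xA].
Qed.
Lemma dp1 : dpartial x one = one.
Proof. by rewrite /dpartial conj1 inv1 mul1. Qed.
Lemma dpP a n : A a -> dpartial x (gpow a n) = gpow (dpartial x a) n.
Proof.
move=> Aa; elim: n => [|n IH]; first exact: dp1.
by rewrite !gpowS dpM ?IH //; apply: subP.
Qed.
Lemma dpV a : A a -> dpartial x (inv a) = inv (dpartial x a).
Proof.
move=> Aa; apply: inv_uniq; rewrite -dpM ?mulxV ?dp1 //; exact: subV.
Qed.
End Abel.

Section Conv.
Variable G : group.
Local Notation "x · y" := (@gmul G x y) (at level 40, left associativity).
Local Notation inv := (@ginv G).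
Local Notation one := (@gone G).
Local Notation gpow := (@gpow G).
Local Notation gconj := (@gconj G).
Hypothesis Hper : periodic G.

Lemma pow_normal (A : G -> Prop) (x a : G) i n : normal_sub A -> A a ->
  exists b, A b /\ gpow (gpow x i · a) n = gpow x (i * n) · b.
Proof.
move=> [sA nA] Aa; elim: n => [|n IH]; first by exists one; rewrite muln0 mul1 gpow0; split => //; apply: sub1.
have [b [Ab hb]] := IH.
exists (gconj a (gpow x (i * n)) · b); split.
  apply: subM => //; exact: (proj1 (nA _ a) Aa).
rewrite gpowS hb mulnS gpowD -!mulA; congr (gmul (gpow x i) _).
by rewrite !mulA mulxV mul1.
Qed.

Theorem converse (x : G) (A : G -> Prop) (p : nat) :
  prime p -> normal_sub A ->
  (forall g : G, exists c a, cyclic_sub x c /\ A a /\ g = gmul c a) ->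
  (forall c, cyclic_sub x c -> A c -> c = gone G) ->
  finite_p_sub p (cyclic_sub x) -> abelian_set A ->
  (forall a, A a -> gconj a (gpow x p) = a) ->
  property_I x A -> in_Yn G.
Proof.
move=> pr nA dec triv [_ fp] abA xp PI.
have [sA nnA] := nA.
have xA : forall a, A a -> A (gconj a x) by move=> a Aa; exact: (proj1 (nnA _ a) Aa).
have dpM' := dpM sA abA xA; have dpP' := dpP sA abA xA; have dpA' := dpA sA xA.
have [k xq] : exists k, gpow x (p ^ k) = one by apply: fp; apply/cyclicP => //; exists 1; rewrite gpow1.
set q := p ^ k in xq.
have dec' : forall g, exists i a, A a /\ g = gpow x i · a.
  move=> g; have [c [a [cc [Aa ->]]]] := dec g.
  by have [i ->] := (cyclicP Hper x c).1 cc; exists i, a.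
have cxp : forall a j, A a -> p %| j -> a · gpow x j = gpow x j · a.
  move=> a j Aa /dvdnP [t ->]; rewrite mulnC gpowM; symmetry; apply: comm_pow; symmetry.
  by apply: comm_conj; apply: xp.
move=> H sH nab g ng.
have [i [a [Aa [Hy ndiv]]]] : exists i a, A a /\ H (gpow x i · a) /\ ~~ (p %| i).
  apply: NNPP => hn; apply: nab => h1 h2 H1 H2.
  have [i1 [a1 [A1 e1]]] := dec' h1; have [i2 [a2 [A2 e2]]] := dec' h2.
  have d1 : p %| i1 by apply: contra_notT hn => nd; exists i1, a1; rewrite -e1.
  have d2 : p %| i2 by apply: contra_notT hn => nd; exists i2, a2; rewrite -e2.
  have hm : forall i1 i2 a1 a2, A a1 -> A a2 -> p %| i2 ->
      (gpow x i1 · a1) · (gpow x i2 · a2) = gpow x i1 · gpow x i2 · (a1 · a2).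
    move=> j1 j2 b1 b2 B1 B2 dj; rewrite -!mulA; congr (gmul (gpow x j1) _).
    by rewrite !mulA cxp.
  by rewrite e1 e2 !hm // gpow_comm (abA a1 a2).
have i0 : 0 < i by move: ndiv; case: (i) => //; rewrite dvdn0.
have cop : coprime i q by rewrite coprimeXr // coprime_sym prime_coprime.
have /(coprimeP _ i0) [[u v] /= huv] := cop.
have e : u * i = v * q + 1 by lia.
set y := gpow x i · a in Hy.
have [b [Ab yu]] := pow_normal x i u nA Aa.
set z := gpow x 1 · b.
have zE : gpow y u = z.
  by rewrite /y yu mulnC e gpowD mulnC gpowM xq gpow_one mul1.
have Hz : H z by rewrite -zE; apply: subP.
have conjz : forall c, A c -> gconj c z = gconj c x.
  move=> c Ac; rewrite /z gpow1 -conjJ conj_comm //; apply: abA => //; exact: xA.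
have [j [c [Ac gE]]] := dec' g.
have [bj [Abj zj]] := pow_normal x 1 j nA Ab.
rewrite mul1n in zj.
set ee := inv bj · c.
have Aee : A ee by apply: subM => //; apply: subV.
have gE' : g = gpow z j · ee by rewrite gE zj /ee -mulA mulVK.
have nee : normalizes ee H.
  have -> : ee = inv (gpow z j) · g by rewrite gE' mulKV.
  apply: norm_mul => //; apply: norm_inv; apply: norm_mem => //; exact: subP.
have HdA : forall c, A c -> H c -> H (dpartial x c).
  move=> c0 Ac0 Hc0; rewrite /dpartial -conjz //; apply: subM => //.
  by apply: subV => //; apply: subJ.
have Hde : H (dpartial x ee).
  have h1 : H (inv z · gconj z ee) by apply: subM => //; [apply: subV|apply: norm_fwdE].
  suff -> : dpartial x ee = inv z · gconj z ee by [].
  have r : inv z · gconj z ee = inv (gconj ee z) · ee by rewrite -conjV !conjE !mulA.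
  rewrite r /dpartial -conjz //.
  apply: abA => //; apply: subV => //; rewrite conjz //; exact: xA.
pose B' := fun w => exists b0 n, (A b0 /\ H b0) /\ w = b0 · gpow ee n.
have AB' : forall w, B' w -> A w.
  by move=> w [b0 [n [[Ab0 _] ->]]]; apply: subM => //; apply: subP.
have sB' : subgroup B'.
  apply: subgroupP => //; first by exists one, 0; rewrite mul1r; split => //; split; apply: sub1.
  move=> w1 w2 [b1 [n1 [[A1 H1] ->]]] [b2 [n2 [[A2 H2] ->]]].
  exists (b1 · b2), (n1 + n2); split; first by split; apply: subM.
  rewrite gpowD -!mulA; congr (_ · _); rewrite !mulA; congr (_ · _).
  by apply: abA => //; apply: subP.
have dB' : forall w, B' w -> B' (dpartial x w).
  move=> w [b0 [n [[A0 H0] ->]]]; exists (dpartial x (b0 · gpow ee n)), 0.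
  rewrite mul1r; split => //; split; first by apply: dpA' => //; apply: subM => //; apply: subP.
  rewrite dpM' ?dpP' //; try (by apply: subP).
  by apply: subM => //; [apply: HdA|apply: subP].
have B'ee : B' ee by exists one, 1; rewrite gpow1 mul1; split => //; split; apply: sub1.
have [c' [Bc' dc']] := PI B' sB' AB' dB' ee B'ee.
case: Bc' dc' => b0 [n [[A0 H0] ->]].
rewrite dpM' ?dpP' //; last by apply: subP.
move=> eE; rewrite gE'; apply: subM => //; first by apply: subP.
rewrite -eE; apply: subM => //; first by apply: HdA.
exact: subP.
Qed.
End Conv.

Section Misc.
Variable G : group.
Local Notation "x · y" := (@gmul G x y) (at level 40, left associativity).
Local Notation inv := (@ginv G).
Local Notation one := (@gone G).
Local Notation gpow := (@gpow G).
Local Notation gconj := (@gconj G).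

Lemma conj_gcomm (a b g : G) : gconj (gcomm a b) g = gcomm (gconj a g) (gconj b g).
Proof.
rewrite /gcomm conjM conjV; congr (_ · _).
by rewrite !conjJ mul_conj.
Qed.

Lemma gcommE (a b : G) : gconj a b = a · gcomm a b.
Proof. by rewrite /gcomm mulVK. Qed.

Lemma pow_mod (a : G) N i : 0 < N -> gpow a N = one -> gpow a i = gpow a (i %% N).
Proof.
move=> N0 aN; rewrite {1}(divn_eq i N) gpowD mulnC gpowM aN gpow_one mul1 //.
Qed.

Lemma min_ex (P : nat -> Prop) : (exists n, P n) -> exists m, P m /\ forall k, P k -> m <= k.
Proof.
move=> [n Pn]; elim: n {-2}n (leqnn n) Pn => [|n IH] k.
  by rewrite leqn0 => /eqP -> P0; exists 0.
move=> kn Pk; case: (classic (exists j, j < k /\ P j)) => [[j [jk Pj]]|hn].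
  by apply: (IH j) => //; lia.
exists k; split => // j Pj; case: (leqP k j) => // jk; exfalso; apply: hn; by exists j.
Qed.

Lemma In_seq_lt i n : i < n -> List.In i (List.seq 0 n).
Proof. move=> h; apply/in_seq; lia. Qed.

End Misc.

Section F1.
Variable G : group.
Local Notation "x · y" := (@gmul G x y) (at level 40, left associativity).
Local Notation inv := (@ginv G).
Local Notation one := (@gone G).
Local Notation gpow := (@gpow G).
Local Notation gconj := (@gconj G).
Hypotheses (Hinf : infinite_group G) (Hnab : ~ abelian_set (fun _ : G => True))
  (Hsol : soluble G) (Hper : periodic G) (HY : in_Yn G).

Definition D := @derived G 1.

Lemma D_sub : subgroup D. Proof. exact: gen_sub. Qed.
Lemma comm_D a b : D (gcomm a b). Proof. by apply: gen_in; exists a, b. Qed.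

Lemma D_fwd g a : D a -> D (gconj a g).
Proof.
move=> Da; apply: (gen_min (K := fun a => D (gconj a g)) _ _ Da).
  split; first by rewrite conj1; apply: sub1 D_sub.
  split; first by move=> u v hu hv; rewrite conjM; apply: subM D_sub _ _.
  by move=> u hu; rewrite conjV; apply: subV D_sub _.
by move=> z [u [v [_ [_ ->]]]]; rewrite conj_gcomm; apply: comm_D.
Qed.

Lemma D_normal g : normalizes g D.
Proof. by apply: norm_fwd => a; apply: D_fwd. Qed.

Lemma D_ab : abelian_set D.
Proof.
apply: NNPP => nab.
have all : forall g, D g by move=> g; apply: HY => //; [exact: D_sub|exact: D_normal].
have der : forall n g, @derived G n g.
  elim=> [|n IH] g //=.
  have := all g; rewrite /D /=.
  apply: gen_min; first exact: gen_sub.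
  by move=> z [u [v [_ [_ ->]]]]; apply: gen_in; exists u, v.
apply: Hnab => a b _ _; have [n hn] := Hsol.
by rewrite (hn a (der n a)) (hn b (der n b)).
Qed.

Lemma supD_normal (H : G -> Prop) : subgroup H -> (forall d, D d -> H d) ->
  forall g, normalizes g H.
Proof.
move=> sH hD g; apply: norm_fwd => a Ha; rewrite gcommE; apply: subM => //; apply: hD; exact: comm_D.
Qed.

Lemma supD_all (H : G -> Prop) : subgroup H -> (forall d, D d -> H d) ->
  ~ abelian_set H -> forall g, H g.
Proof. by move=> sH hD nab g; apply: HY => //; apply: supD_normal. Qed.

Lemma fin_contra (l : list G) : (forall w, In w l) -> False.
Proof. by move=> h; apply: Hinf; exists l. Qed.

Lemma order_ex (a : G) : exists N, 0 < N /\ gpow a N = one.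
Proof. exact: Hper. Qed.

Lemma caseI : (forall g d, D d -> g · d = d · g) -> False.
Proof.
move=> cD.
have [a [b nab]] : exists a b, a · b <> b · a.
  apply: NNPP => h; apply: Hnab => a b _ _; apply: NNPP => h'; apply: h; by exists a, b.
set c := gcomm b a.
have cc : forall w, c · w = w · c by move=> w; symmetry; apply: cD; exact: comm_D.
have ba : b · a = a · b · c by rewrite /c /gcomm conjE !mulA mulKr mulxV mul1.
have ck : forall k w, gpow c k · w = w · gpow c k by move=> k w; apply: comm_pow (cc w).
have b_ai : forall i, b · gpow a i = gpow a i · b · gpow c i.
  elim=> [|i IH]; first by rewrite mul1 !mul1r.
  by rewrite gpowSr (gpowS c) mulA IH -(mulA _ (gpow c i) a) ck mulA
    -(mulA (gpow a i) b a) ba !mulA.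
have bj_ai : forall j i, gpow b j · gpow a i = gpow a i · gpow b j · gpow c (j * i).
  elim=> [|j IH] i; first by rewrite mul0n /= mul1 !mul1r.
  rewrite gpowS -mulA IH !mulA b_ai mulSn gpowD !mulA.
  by rewrite -(mulA (gpow a i · b) (gpow c i) (gpow b j)) ck !mulA.
pose S := fun w => exists i j k, w = gpow a i · gpow b j · gpow c k.
have sS : subgroup S.
  apply: subgroupP => //; first by exists 0, 0, 0; rewrite !mul1.
  move=> u v [i [j [k ->]]] [i' [j' [k' ->]]].
  exists (i + i'), (j + j'), (j * i' + k + k').
  rewrite !mulA -(mulA (gpow a i · gpow b j) (gpow c k) (gpow a i')) ck mulA.
  rewrite -(mulA _ (gpow c k) (gpow b j')) ck mulA.
  rewrite -(mulA (gpow a i) (gpow b j) (gpow a i')) bj_ai !mulA.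
  rewrite -(mulA _ (gpow c (j * i')) (gpow b j')) ck mulA.
  by rewrite !gpowD !mulA.
have Sa : S a by exists 1, 0, 0; rewrite gpow1 !mul1r.
have Sb : S b by exists 0, 1, 0; rewrite gpow1 mul1 mul1r.
have nS : ~ abelian_set S by move=> h; apply: nab; apply: h.
have Sall : forall w, S w.
  apply: supD_all => // d Dd; apply: central_in => //.
  by move=> h; symmetry; apply: cD.
have [Na [Na0 aN]] := order_ex a; have [Nb [Nb0 bN]] := order_ex b.
have [Nc [Nc0 cN]] := order_ex c.
apply: (fin_contra (l := flat_map (fun i => flat_map (fun j => map (fun k =>
   gpow a i · gpow b j · gpow c k) (List.seq 0 Nc)) (List.seq 0 Nb)) (List.seq 0 Na))).
move=> w; have [i [j [k ->]]] := Sall w.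
rewrite (pow_mod i Na0 aN) (pow_mod j Nb0 bN) (pow_mod k Nc0 cN).
apply/in_flat_map; exists (i %% Na); split; first by apply: In_seq_lt; rewrite ltn_pmod.
apply/in_flat_map; exists (j %% Nb); split; first by apply: In_seq_lt; rewrite ltn_pmod.
apply/in_map_iff; exists (k %% Nc); split => //; by apply: In_seq_lt; rewrite ltn_pmod.
Qed.
End F1.

Section F2.
Variable G : group.
Local Notation "x · y" := (@gmul G x y) (at level 40, left associativity).
Local Notation inv := (@ginv G).
Local Notation one := (@gone G).
Local Notation gpow := (@gpow G).
Local Notation gconj := (@gconj G).
Local Notation D := (@D G).
Hypotheses (Hinf : infinite_group G) (Hnab : ~ abelian_set (fun _ : G => True))
  (Hsol : soluble G) (Hper : periodic G) (HY : in_Yn G).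
Variables (g d0 : G).
Hypotheses (Dd0 : D d0) (ngd : g · d0 <> d0 · g).

Definition C := fun c : G => forall d, D d -> c · d = d · c.

Lemma C_sub : subgroup C.
Proof.
split; first by move=> d _; rewrite mul1 mul1r.
split; first by move=> u v hu hv d Dd; rewrite -mulA hv // mulA hu // -mulA.
move=> u hu d Dd; apply: (@mulIl _ u); by rewrite mulVK mulA hu // mulKr.
Qed.
Lemma D_C d : D d -> C d. Proof. by move=> Dd d' Dd'; apply: (D_ab Hnab Hsol HY). Qed.
Lemma C_normal h : normalizes h C.
Proof. by apply: supD_normal => //; [exact: C_sub|exact: D_C]. Qed.
Lemma C_conj c h : C c -> C (gconj c h).
Proof. by move=> Cc; apply/(C_normal h c). Qed.
Lemma gnC : ~ C g. Proof. by move=> h; apply: ngd; apply: h. Qed.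
Lemma C_ab : abelian_set C.
Proof.
apply: NNPP => nab; apply: gnC; apply: HY => //; first exact: C_sub.
exact: C_normal.
Qed.

Lemma gen_all (h : G) : ~ C h -> forall w, exists n d, D d /\ w = gpow h n · d.
Proof.
move=> nh.
pose S := fun w => exists n d, D d /\ w = gpow h n · d.
have sS : subgroup S.
  apply: subgroupP => //; first (exists 0, one; split; [idtac|by rewrite mul1r]). exact: (sub1 (D_sub G)).
  move=> u v [n [d [Dd ->]]] [m [d' [Dd' ->]]].
  exists (n + m), (gconj d (gpow h m) · d'); split.
    by apply: subM (D_sub G) _ _ => //; apply: D_fwd.
  by rewrite gpowD -(mulA (gpow h n) (gpow h m)) (mulA (gpow h m) (gconj d _) d') mul_conj !mulA.
apply: (supD_all HY) => //.
- by move=> d Dd; exists 0, d; split => //; rewrite mul1.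
- move=> ab; apply: nh => d Dd; apply: ab.
    by exists 1, one; split; [exact: (sub1 (D_sub G))|rewrite gpow1 mul1r].
  by exists 0, d; split => //; rewrite mul1.
Qed.

Lemma inv_gpow (h : G) N k : 0 < N -> gpow h N = one -> inv (gpow h k) = gpow h ((N - 1) * k).
Proof.
move=> N0 hN; symmetry; apply: inv_uniq.
by rewrite -gpowD -{1}(mul1n k) -mulnDl subnKC // gpowM hN gpow_one.
Qed.

Definition Pm (n : nat) := 0 < n /\ C (gpow g n).

Lemma ex_m : exists m, Pm m /\ forall k, Pm k -> m <= k.
Proof.
apply: min_ex; have [N [N0 gN]] := Hper g; exists N; split => //.
by rewrite gN; apply: sub1 C_sub.
Qed.

Definition m0 := proj1_sig (constructive_indefinite_description _ ex_m).
Lemma m0P : Pm m0 /\ forall k, Pm k -> m0 <= k.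
Proof. exact: (proj2_sig (constructive_indefinite_description _ ex_m)). Qed.

Lemma m0_dvd a : C (gpow g a) -> m0 %| a.
Proof.
move=> Ca; have [[m00 Cm] mmin] := m0P.
have Cr : C (gpow g (a %% m0)).
  have e : gpow g a = gpow (gpow g m0) (a %/ m0) · gpow g (a %% m0).
    by rewrite -gpowM mulnC -gpowD -divn_eq.
  apply: (subMl C_sub (x := gpow (gpow g m0) (a %/ m0))); first by apply: subP C_sub _.
  by rewrite -e.
rewrite /dvdn; apply/eqP; apply: NNPP => hr.
have : m0 <= a %% m0 by apply: mmin; split => //; lia.
by rewrite leqNgt ltn_pmod.
Qed.

Lemma m0_gt1 : 1 < m0.
Proof.
have [[m00 Cm] _] := m0P; case: m0 m00 Cm => [|[|n]] //= _.
by rewrite mul1r => h; exfalso; apply: gnC.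
Qed.

Definition p := pdiv m0.
Lemma p_prime : prime p. Proof. exact: pdiv_prime m0_gt1. Qed.
Lemma p_dvd a : C (gpow g a) -> p %| a.
Proof. by move=> h; apply: dvdn_trans (m0_dvd h); apply: pdiv_dvd. Qed.

Lemma gp_C : C (gpow g p).
Proof.
apply: NNPP => nC.
have [n [d [Dd e]]] := gen_all nC g.
have [N [N0 gN]] := Hper g.
have Cd : C (gpow g ((N - 1) * (p * n) + 1)).
  rewrite gpowD gpow1 -(inv_gpow _ N0 gN) gpowM [X in inv _ · X]e mulKV.
  exact: D_C.
have := p_dvd Cd; rewrite dvdn_addr; last by rewrite dvdn_mull // dvdn_mulr.
by rewrite dvdn1; move: p_prime => /[swap] /eqP ->.
Qed.

Lemma every_elt w : exists n d, D d /\ w = gpow g n · d.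
Proof. exact: gen_all gnC w. Qed.

Lemma gp_central w : gpow g p · w = w · gpow g p.
Proof.
have [n [d [Dd ->]]] := every_elt w.
rewrite mulA -(gpowD g p n) addnC gpowD -!mulA; congr (_ · _); exact: gp_C.
Qed.

Definition Ng := proj1_sig (constructive_indefinite_description _ (Hper g)).
Lemma NgP : 0 < Ng /\ gpow g Ng = one.
Proof. exact: (proj2_sig (constructive_indefinite_description _ (Hper g))). Qed.
Lemma Ng0 : 0 < Ng. Proof. by case: NgP. Qed.
Lemma gNg : gpow g Ng = one. Proof. by case: NgP. Qed.

Definition e := logn p Ng.
Definition q := p ^ e.
Definition r := Ng %/ q.

Lemma p_Ng : p %| Ng.
Proof. by apply: p_dvd; rewrite gNg; apply: sub1 C_sub. Qed.
Lemma e_gt0 : 0 < e.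
Proof. by rewrite /e -pfactor_dvdn ?expn1 ?p_prime ?Ng0 ?p_Ng. Qed.
Lemma q_dvd : q %| Ng. Proof. exact: pfactor_dvdnn. Qed.
Lemma Ng_rq : Ng = r * q. Proof. by rewrite /r divnK // q_dvd. Qed.
Lemma r_gt0 : 0 < r.
Proof. by have := Ng0; rewrite Ng_rq; case: r. Qed.
Lemma q_gt0 : 0 < q. Proof. by rewrite /q expn_gt0 prime_gt0 // p_prime. Qed.
Lemma cop_rp : coprime r p.
Proof.
rewrite coprime_sym prime_coprime ?p_prime //; apply/negP => /dvdnP [t ht].
have : p ^ e.+1 %| Ng by rewrite Ng_rq ht /q expnS; apply: dvdn_mul; [exact: dvdn_mull (dvdnn p)|exact: dvdnn].
by rewrite pfactor_dvdn ?p_prime ?Ng0 // /e ltnn.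
Qed.
Lemma cop_rq : coprime r q. Proof. by rewrite /q coprimeXr // cop_rp. Qed.
Lemma p_dvd_q : p %| q.
Proof. by rewrite /q -(prednK e_gt0) expnS dvdn_mulr. Qed.

Definition x := gpow g r.
Definition y := gpow g q.

Lemma xq : gpow x q = one. Proof. by rewrite /x -gpowM -Ng_rq gNg. Qed.
Lemma yr : gpow y r = one. Proof. by rewrite /y -gpowM mulnC -Ng_rq gNg. Qed.

Lemma gpk_central k w : gpow g (p * k) · w = w · gpow g (p * k).
Proof. by rewrite gpowM; apply: comm_pow; apply: gp_central. Qed.

Lemma y_central w : y · w = w · y.
Proof. by rewrite /y; have [t ->] := dvdnP p_dvd_q; rewrite mulnC; apply: gpk_central. Qed.

Lemma xpk_central k w : gpow x (p * k) · w = w · gpow x (p * k).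
Proof. by rewrite /x -gpowM mulnCA; apply: gpk_central. Qed.

Lemma xi_C i : C (gpow x i) -> p %| i.
Proof.
by move=> h; have := @p_dvd (r * i); rewrite gpowM -/x => /(_ h); rewrite Gauss_dvdr // coprime_sym cop_rp.
Qed.

Lemma g_dec : exists u v, g = inv (gpow y v) · gpow x u.
Proof.
have /(coprimeP _ r_gt0) [[u v] /= huv] := cop_rq.
have ee : u * r = v * q + 1 by lia.
exists u, v; apply: (@mulIl _ (gpow y v)); rewrite mulVK /x /y -!gpowM.
by rewrite (mulnC r u) ee gpowD gpow1 mulnC.
Qed.

Notation dp := (dpartial x).

Lemma C_conjx c : C c -> C (gconj c x). Proof. exact: C_conj. Qed.
Lemma dpC c : C c -> C (dp c). Proof. exact: (dpA C_sub C_conjx). Qed.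
Lemma dpCM a b : C a -> C b -> dp (a · b) = dp a · dp b.
Proof. exact: (dpM C_sub C_ab C_conjx). Qed.
Lemma dpCP a n : C a -> dp (gpow a n) = gpow (dp a) n.
Proof. exact: (dpP C_sub C_ab C_conjx). Qed.
Lemma dpCV a : C a -> dp (inv a) = inv (dp a).
Proof. exact: (dpV C_sub C_ab C_conjx). Qed.
Lemma dp_conj c : dp (gconj c x) = gconj (dp c) x.
Proof. by rewrite /dpartial conjM conjV. Qed.
Lemma dp1E c : dp c = one -> gconj c x = c.
Proof. by move=> h; symmetry; apply: eq_mulV. Qed.
Lemma dp1I c : gconj c x = c -> dp c = one.
Proof. by move=> h; rewrite /dpartial h mulxV. Qed.
Lemma dp_xi i : dp (gpow x i) = one.
Proof. by apply: dp1I; apply: conj_comm; symmetry; apply: gpow_commx. Qed.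
Lemma dp_one : dp one = one.
Proof. by apply: dp1I; rewrite conj1. Qed.
Lemma C_comm a b : C a -> C b -> a · b = b · a.
Proof. exact: C_ab. Qed.

Lemma L (K : G -> Prop) : subgroup K -> (forall k, K k -> C k) ->
  (forall k, K k -> K (gconj k x)) -> (exists k, K k /\ dp k <> one) ->
  forall c, C c -> K (dp c) -> exists i k, K k /\ c = gpow x i · k.
Proof.
move=> sK KC Kx [k0 [Kk0 dk0]] c Cc Kc.
have Kxi : forall i k, K k -> K (gconj k (gpow x i)).
  elim=> [|i IH] k Kk; first by rewrite conjg1.
  by rewrite gpowS -conjJ; apply: IH; apply: Kx.
pose HK := fun w => exists i k, K k /\ w = gpow x i · k.
have sHK : subgroup HK.
  apply: subgroupP => //; first by exists 0, one; split; [exact: sub1|rewrite mul1r].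
  move=> u v [n [d [Dd ->]]] [m [d' [Dd' ->]]].
  exists (n + m), (gconj d (gpow x m) · d'); split.
    by apply: subM => //; apply: Kxi.
  by rewrite gpowD -(mulA (gpow x n) (gpow x m)) (mulA (gpow x m) (gconj d _) d') mul_conj !mulA.
have fwd : forall c', C c' -> K (dp c') -> forall w, HK w -> HK (gconj w c').
  move=> c' Cc' Kc' w [i [k [Kk ->]]].
  set t := fun i => gconj (inv c') (gpow x i) · c'.
  have Kt : forall i, K (t i).
    elim=> [|j IH]; first by rewrite /t conjg1 mulVx; apply: sub1.
    have -> : t j.+1 = gconj (dp c') (gpow x j) · t j.
      have -> : dp c' = gconj (inv c') x · c'.
        rewrite /dpartial conjV; apply: C_comm => //; apply: subV C_sub _; exact: C_conjx.
      rewrite /t conjM conjJ -gpowS -(mulA (gconj (inv c') _) (gconj c' _)).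
      by rewrite (mulA (gconj c' _) (gconj (inv c') _) c') -conjM mulxV conj1 mul1.
    by apply: subM => //; apply: Kxi.
  exists i, (t i · k); split; first by apply: subM.
  rewrite conjM (conj_comm (a := k)); last by apply: C_comm => //; apply: KC.
  rewrite (mulA (gpow x i)); congr (gmul _ k).
  by rewrite /t (mulA (gpow x i)) mul_conj conjE mulA.
have ncH : normalizes c HK.
  apply: norm_fwd; first exact: fwd.
  apply: fwd; first by apply: subV C_sub _.
  by rewrite dpCV //; apply: subV.
suff nab : ~ abelian_set HK by exact: (HY sHK nab ncH).
move=> ab; apply: dk0; apply: dp1I; apply: conj_comm; symmetry; apply: ab.
  by exists 1, one; split; [exact: sub1|rewrite gpow1 mul1r].
by exists 0, k0; split => //; rewrite mul1.
Qed.

Fixpoint prodn (F : nat -> G) n := match n with 0 => one | S n => prodn F n · F n end.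

Lemma prodn_C F n : (forall j, C (F j)) -> C (prodn F n).
Proof. by move=> hF; elim: n => [|n IH] /=; [apply: sub1 C_sub|apply: subM C_sub _ _]. Qed.

Lemma prodn_mul F H n : (forall j, C (F j)) -> (forall j, C (H j)) ->
  prodn (fun j => F j · H j) n = prodn F n · prodn H n.
Proof.
move=> hF hH; elim: n => [|n IH] /=; first by rewrite mul1.
rewrite IH -!mulA; congr (gmul (prodn F n) _); rewrite !mulA; congr (gmul _ (H n)).
by apply: C_comm => //; apply: prodn_C.
Qed.

Lemma prodn_shift F n : (forall j, C (F j)) ->
  prodn F n.+1 = F 0 · prodn (fun j => F j.+1) n.
Proof.
move=> hF; elim: n => [|n IH]; first by rewrite /= mul1 mul1r.
change (prodn F n.+1 · F n.+1 = F 0 · (prodn (fun j => F j.+1) n · F n.+1)); by rewrite IH mulA.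
Qed.

Lemma prodn_ext F H n : (forall j, j < n -> F j = H j) -> prodn F n = prodn H n.
Proof.
elim: n => [|n IH] h //=; rewrite IH ?h // => j jn; apply: h; exact: ltnW.
Qed.

Lemma dp_prodn F n : (forall j, C (F j)) -> dp (prodn F n) = prodn (fun j => dp (F j)) n.
Proof.
move=> hF; elim: n => [|n IH] /=; first exact: dp_one.
by rewrite dpCM ?IH //; apply: prodn_C.
Qed.

Lemma prodn_pow F n k : (forall j, C (F j)) ->
  gpow (prodn F n) k = prodn (fun j => gpow (F j) k) n.
Proof.
move=> hF; elim: n => [|n IH] /=; first exact: gpow_one.
by rewrite gpowMc ?IH //; apply: C_comm => //; apply: prodn_C.
Qed.

Definition Sx (w : G) j := gconj w (gpow x j).

Lemma S_C w j : C w -> C (Sx w j). Proof. by move=> h; apply: C_conj. Qed.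
Lemma S_succ w j : gconj (Sx w j) x = Sx w j.+1.
Proof. by rewrite /Sx conjJ -gpowSr. Qed.

Lemma binom_formula (w : G) Q n : 0 < Q -> C w -> gpow w Q = one ->
  iter n dp w = prodn (fun j => gpow (Sx w j) ('C(n, j) * (Q - 1) ^ j)) n.+1.
Proof.
move=> Q0 Cw wQ.
have SQ : forall j, gpow (Sx w j) Q = one by move=> j; rewrite /Sx -conj_pow wQ conj1.
have CS : forall j k, C (gpow (Sx w j) k) by move=> j k; apply: subP C_sub _; apply: S_C.
elim: n => [|n IH].
  by rewrite /= mul1 /Sx mul1r conjg1.
rewrite iterS IH dp_prodn //.
have dpF : forall j a, dp (gpow (Sx w j) a) = gpow (Sx w j) a · gpow (Sx w j.+1) ((Q - 1) * a).
  move=> j a; rewrite /dpartial conj_pow S_succ (inv_gpow _ Q0 (SQ j.+1)).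
  done.
rewrite (prodn_ext (H := fun j => gpow (Sx w j) ('C(n, j) * (Q - 1) ^ j) ·
    gpow (Sx w j.+1) ('C(n, j) * (Q - 1) ^ j.+1))); last first.
  by move=> j _; rewrite dpF mulnCA -expnS.
rewrite prodn_mul // (prodn_shift n.+1) // (prodn_shift n) //.
rewrite !bin0 -(mulA (gpow (Sx w 0) _)); congr (gmul (gpow (Sx w 0) _) _).
rewrite (prodn_ext (n := n.+1) (F := fun j => gpow (Sx w j.+1) ('C(n.+1, j.+1) * (Q - 1) ^ j.+1)) (H := fun j => gpow (Sx w j.+1) ('C(n, j.+1) * (Q - 1) ^ j.+1) ·
    gpow (Sx w j.+1) ('C(n, j) * (Q - 1) ^ j.+1))); last first.
  by move=> j _; rewrite binS mulnDl gpowD.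
rewrite prodn_mul //; congr (gmul _ _).
by rewrite /= bin_small // mul0n gpow0 mul1r.
Qed.

Lemma prodn_one F n : (forall j, j < n -> F j = one) -> prodn F n = one.
Proof.
elim: n => [|n IH] h //=; rewrite IH ?h ?mul1 // => j jn; apply: h; exact: ltnW.
Qed.

Lemma iter_dpC n w : C w -> C (iter n dp w).
Proof. by move=> Cw; elim: n => [|n IH] //=; apply: dpC. Qed.

Lemma iter_dp_pow n w k : C w -> iter n dp (gpow w k) = gpow (iter n dp w) k.
Proof.
move=> Cw; elim: n => [|n IH] //=; rewrite IH dpCP //; exact: iter_dpC.
Qed.

Lemma p_gt0 : 0 < p. Proof. exact: prime_gt0 p_prime. Qed.

Lemma fermat_aux s : 0 < s -> p %| (p ^ s - 1) ^ p + 1.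
Proof.
move=> s0; have Q0 : 0 < p ^ s by rewrite expn_gt0 p_gt0.
rewrite /dvdn -modnDml fermat_little ?p_prime // modnDml subnK //.
change (p %| p ^ s); by rewrite -(prednK s0) expnS dvdn_mulr.
Qed.

Lemma Nil1 s w : 0 < s -> C w -> gpow w (p ^ s) = one ->
  exists u, C u /\ gpow u (p ^ s) = one /\ iter p dp w = gpow u p.
Proof.
move=> s0 Cw wQ; set Q := p ^ s in wQ *.
have Q0 : 0 < Q by rewrite expn_gt0 p_gt0.
have SQ : forall j, gpow (Sx w j) Q = one by move=> j; rewrite /Sx -conj_pow wQ conj1.
have CS : forall j k, C (gpow (Sx w j) k) by move=> j k; apply: subP C_sub _; apply: S_C.
set t := ((Q - 1) ^ p + 1) %/ p.
have tp : t * p = (Q - 1) ^ p + 1 by rewrite /t divnK // fermat_aux.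
pose c := fun j => 'C(p, j.+1) %/ p * (Q - 1) ^ j.+1.
exists (gpow w t · prodn (fun j => gpow (Sx w j.+1) (c j)) p.-1).
have Cpr : C (prodn (fun j => gpow (Sx w j.+1) (c j)) p.-1) by apply: prodn_C.
have Cwt : C (gpow w t) by apply: subP C_sub _.
split; first by apply: subM C_sub _ _.
split.
  rewrite gpowMc; last by apply: C_comm.
  rewrite prodn_pow // prodn_one.
    by rewrite mul1r -gpowM mulnC gpowM wQ gpow_one.
  by move=> j _; rewrite -gpowM mulnC gpowM SQ gpow_one.
rewrite (binom_formula p Q0 Cw wQ) (prodn_shift p) //.
have hp : forall F, prodn F p = prodn F p.-1 · F p.-1 by move=> F; rewrite -{1}(prednK p_gt0).
rewrite hp /= (prednK p_gt0).
have Sp : Sx w p = w.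
  by rewrite /Sx conj_comm // -(muln1 p); symmetry; apply: xpk_central.
rewrite bin0 expn0 muln1 binn mul1n Sp /Sx conjg1 gpow1.
rewrite (prodn_ext (H := fun j => gpow (gpow (Sx w j.+1) (c j)) p)); last first.
  move=> j jp; rewrite -gpowM /c mulnAC divnK //; apply: prime_dvd_bin; first exact: p_prime.
  by rewrite ltn0Sn /= -ltnS (prednK p_gt0) in jp *; rewrite jp.
rewrite gpowMc; last by apply: C_comm.
rewrite prodn_pow; last by move=> j; apply: CS.
rewrite -[gpow (gpow w t) p]gpowM tp addnC gpowD gpow1.
rewrite -mulA; congr (gmul w _); apply: C_comm.
  by apply: prodn_C => j; apply: subP C_sub _; apply: CS.
by apply: subP C_sub _.
Qed.

Lemma Nil s w : C w -> gpow w (p ^ s) = one -> iter (p * s) dp w = one.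
Proof.
move=> Cw wQ; case: s wQ => [|s] wQ; first by rewrite expn0 gpow1 in wQ; rewrite muln0.
have step : forall t, exists u, C u /\ gpow u (p ^ s.+1) = one /\
    iter (p * t) dp w = gpow u (p ^ t).
  elim=> [|t [u [Cu [uQ IH]]]]; first by exists w; rewrite muln0 expn0 gpow1.
  have [u' [Cu' [u'Q hu']]] := Nil1 (ltn0Sn s) Cu uQ.
  exists u'; split => //; split => //.
  by rewrite mulnS iterD IH iter_dp_pow // hu' -gpowM expnS.
have [u [_ [uQ ->]]] := step s.+1; exact: uQ.
Qed.


Lemma conjxp c : gconj c (gpow x p) = c.
Proof. by apply: conj_comm; rewrite -(muln1 p); symmetry; apply: xpk_central. Qed.

Lemma dd_pow c : C c -> dp (dp c) = one -> gpow (dp c) p = one.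
Proof.
move=> Cc h; have fx := dp1E h.
have cx : gconj c x = inv (dp c) · c.
  by rewrite /dpartial invM invK mulVr.
have cxn : forall n, gconj c (gpow x n) = gpow (inv (dp c)) n · c.
  elim=> [|n IH]; first by rewrite conjg1 mul1.
  rewrite gpowSr -conjJ IH conjM conj_pow conjV fx cx mulA -gpowSr.
  by rewrite gpowS gpow_commx.
have := cxn p; rewrite conjxp => e1.
have e2 : gpow (inv (dp c)) p = one by apply: (@mulIr _ c); rewrite -e1 mul1.
by apply: inv_eq1; rewrite -gpow_inv.
Qed.

Definition V s := fun v => C v /\ gpow v (p ^ s) = one.

Lemma V_sub s : subgroup (V s).
Proof.
apply: (subgroupP Hper); first by split; [apply: sub1 C_sub|apply: gpow_one].
move=> u v [Cu hu] [Cv hv]; split; first by apply: subM C_sub _ _.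
by rewrite gpowMc ?hu ?hv ?mul1 //; apply: C_comm.
Qed.
Lemma V_conj s v : V s v -> V s (gconj v x).
Proof. by case=> Cv hv; split; [apply: C_conjx|rewrite -conj_pow hv conj1]. Qed.
Lemma V_dp s v : V s v -> V s (dp v).
Proof. by case=> Cv hv; split; [apply: dpC|rewrite -dpCP // hv dp_one]. Qed.

Lemma alpha s v : V s v -> dp (dp v) = one.
Proof.
move=> Vv; apply: NNPP => hn.
pose K := fun k => exists w, V s w /\ k = dp w.
have sK : subgroup K.
  apply: (subgroupP Hper); first by exists one; split; [apply: sub1 (V_sub s)|rewrite dp_one].
  move=> u u' [w [Vw ->]] [w' [Vw' ->]]; exists (w · w'); split.
    exact: subM (V_sub s) _ _.
  by rewrite dpCM //; [case: Vw|case: Vw'].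
have KC : forall k, K k -> C k by move=> k [w [[Cw _] ->]]; apply: dpC.
have Kx : forall k, K k -> K (gconj k x).
  by move=> k [w [Vw ->]]; exists (gconj w x); split; [apply: V_conj|rewrite dp_conj].
have Kex : exists k, K k /\ dp k <> one by exists (dp v); split => //; exists v.
have key : forall w, V s w -> exists w', V s w' /\ dp w = dp (dp w').
  move=> w Vw; have [Cw _] := Vw.
  have [i [k [[w' [Vw' ->]] e]]] := L sK KC Kx Kex Cw (ex_intro _ w (conj Vw erefl)).
  exists w'; split => //.
  have Cw' : C (dp w') by apply: dpC; case: Vw'.
  have Cxi : C (gpow x i) by rewrite -(mulKr (gpow x i) (dp w')) -e; apply: subM C_sub _ _ => //; apply: subV C_sub _.
  by rewrite e dpCM // dp_xi mul1.
have iter_key : forall n w, V s w -> exists w', V s w' /\ dp w = iter n.+1 dp w'.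
  elim=> [|n IH] w Vw; first by exists w.
  have [w1 [Vw1 e1]] := IH w Vw.
  have [w2 [Vw2 e2]] := key w1 Vw1.
  by exists w2; split => //; rewrite e1 !iterSr e2.
have all1 : forall w, V s w -> dp w = one.
  move=> w Vw; have [w' [[Cw' hw'] ->]] := iter_key (p * s) w Vw.
  by rewrite iterS Nil // dp_one.
by apply: hn; apply: all1; apply: V_dp.
Qed.

Definition A := fun a => C a /\ exists n, 0 < n /\ coprime n p /\ gpow a n = one.

Lemma A_sub : subgroup A.
Proof.
apply: (subgroupP Hper).
  split; first by apply: sub1 C_sub.
  by exists 1; rewrite coprime1n gpow1.
move=> u v [Cu [n [n0 [cn hn]]]] [Cv [m [m0 [cm hm]]]]; split; first by apply: subM C_sub _ _.
exists (n * m); split; first by rewrite muln_gt0 n0.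
split; first by rewrite coprimeMl cn.
rewrite gpowMc; last by apply: C_comm.
by rewrite gpowM hn gpow_one mul1 mulnC gpowM hm gpow_one.
Qed.
Lemma A_C a : A a -> C a. Proof. by case. Qed.
Lemma A_conj a h : A a -> A (gconj a h).
Proof.
case=> Ca [n [n0 [cn hn]]]; split; first by apply: C_conj.
by exists n; rewrite -conj_pow hn conj1.
Qed.
Lemma A_normal h : normalizes h A.
Proof. by apply: norm_fwd => a; apply: A_conj. Qed.
Lemma A_ab : abelian_set A.
Proof. by move=> a b [Ca _] [Cb _]; apply: C_comm. Qed.
Lemma A_pelt a k : A a -> gpow a (p ^ k) = one -> a = one.
Proof.
case=> _ [n [n0 [cn hn]]] hk; apply: (gpow_coprime n0 _ hn hk).
exact: coprimeXr.
Qed.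
Lemma A_dp a : A a -> A (dp a).
Proof. by move=> Aa; apply: subM A_sub _ _ => //; apply: subV A_sub _; apply: A_conj. Qed.

Lemma xq_i i : gpow (gpow x i) q = one.
Proof. by rewrite -gpowM mulnC gpowM xq gpow_one. Qed.
Lemma xi_A i : A (gpow x i) -> gpow x i = one.
Proof. by move=> h; apply: (A_pelt (k := e) h); apply: xq_i. Qed.

Lemma split_p N : 0 < N -> exists k r, N = r * p ^ k /\ coprime r p /\ 0 < r.
Proof.
move=> N0; exists (logn p N), (N %/ p ^ logn p N).
have qd : p ^ logn p N %| N by apply: pfactor_dvdnn.
have NE : N = N %/ p ^ logn p N * p ^ logn p N by rewrite divnK.
split => //; split; last by move: N0; rewrite {1}NE; case: (N %/ _).
rewrite coprime_sym prime_coprime ?p_prime //; apply/negP => /dvdnP [t ht].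
have : p ^ (logn p N).+1 %| N.
  rewrite [X in _ %| X]NE ht expnS; apply: dvdn_mul; [exact: dvdn_mull (dvdnn p)|exact: dvdnn].
by rewrite pfactor_dvdn ?p_prime // ltnn.
Qed.

Lemma C_dec c : C c -> exists k c1 c2, V k c1 /\ A c2 /\ c = c2 · c1.
Proof.
move=> Cc; have [N [N0 cN]] := Hper c.
have [k [r0 [NE [cr r00]]]] := split_p N0.
have crq : coprime r0 (p ^ k) by rewrite coprimeXr.
have /(coprimeP _ r00) [[u v] /= huv] := crq.
have ee : u * r0 = v * p ^ k + 1 by lia.
exists k, (gpow c (u * r0)), (inv (gpow c (v * p ^ k))).
split.
  split; first by apply: subP C_sub _.
  by rewrite -gpowM -mulnA -NE mulnC gpowM cN gpow_one.
split.
  split; first by apply: subV C_sub _; apply: subP C_sub _.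
  exists r0; split => //; split => //.
  by rewrite gpow_inv -gpowM -mulnA (mulnC (p ^ k)) -NE mulnC gpowM cN gpow_one inv1.
by rewrite ee gpowD gpow1 mulKV.
Qed.

Lemma comm_inv a b : a · b = b · a -> inv a · b = b · inv a.
Proof. by move=> h; apply: (@mulIl _ a); rewrite mulVK mulA h mulKr. Qed.

Lemma commute_g z : z · x = x · z -> z · g = g · z.
Proof.
move=> zx; have [u [v ge]] := g_dec.
have zy : z · inv (gpow y v) = inv (gpow y v) · z.
  symmetry; apply: comm_inv; apply: comm_pow; apply: y_central.
have zxu : z · gpow x u = gpow x u · z by symmetry; apply: comm_pow; symmetry.
by rewrite ge mulA zy -mulA zxu mulA.
Qed.

Lemma central_Z z : C z -> dp z = one -> forall w, z · w = w · z.
Proof.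
move=> Cz dz w; have zx : z · x = x · z by apply: comm_conj; apply: dp1E.
have zg := commute_g zx.
have [n [d [Dd ->]]] := every_elt w.
by rewrite mulA -(comm_pow n (esym zg)) -mulA (Cz d Dd) mulA.
Qed.

Lemma finC : (forall c, C c -> dp (dp c) = one) -> False.
Proof.
move=> dd.
have Cd0 : C d0 by apply: D_C.
have nd0 : dp d0 <> one.
  move=> h; apply: ngd; symmetry; apply: central_Z => //.
set z0 := dp d0.
have Cz0 : C z0 by apply: dpC.
have zc : forall w, z0 · w = w · z0 by apply: central_Z => //; apply: dd.
have z0p : gpow z0 p = one by apply: dd_pow => //; apply: dd.
have iz0 : inv z0 = gpow z0 (p - 1) by rewrite -(gpow1 z0) (inv_gpow _ p_gt0 z0p) muln1 gpow1.
have fx : gconj z0 x = z0 by apply: dp1E; apply: dd.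
have cx : gconj d0 x = inv z0 · d0 by rewrite /z0 /dpartial invM invK mulVr.
have cxn : forall n, gconj d0 (gpow x n) = gpow z0 ((p - 1) * n) · d0.
  elim=> [|n IH]; first by rewrite muln0 /= conjg1 mul1.
  rewrite gpowSr -conjJ IH conjM conj_pow fx cx iz0 mulA -gpowD mulnS addnC.
  done.
have cxnj : forall n j, gconj (gpow d0 j) (gpow x n) = gpow z0 ((p - 1) * n * j) · gpow d0 j.
  move=> n j; rewrite conj_pow cxn gpowMc; last by apply: comm_pow; apply: zc.
  by rewrite -(gpowM z0).
have ck : forall k w, gpow z0 k · w = w · gpow z0 k by move=> k w; apply: comm_pow.
pose H0 := fun w => exists i j k, w = gpow x i · gpow d0 j · gpow z0 k.
have sH0 : subgroup H0.
  apply: (subgroupP Hper); first by exists 0, 0, 0; rewrite !mul1.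
  move=> u v [i [j [k ->]]] [i' [j' [k' ->]]].
  exists (i + i'), (j + j'), ((p - 1) * i' * j + k + k').
  rewrite !mulA -(mulA (gpow x i · gpow d0 j) (gpow z0 k) (gpow x i')) ck mulA.
  rewrite -(mulA _ (gpow z0 k) (gpow d0 j')) ck mulA.
  rewrite -(mulA (gpow x i) (gpow d0 j) (gpow x i')) -(mul_conj (gpow d0 j) (gpow x i')) cxnj !mulA.
  rewrite -(mulA _ (gpow z0 ((p - 1) * i' * j)) (gpow d0 j)) ck mulA.
  rewrite -(mulA _ (gpow z0 ((p - 1) * i' * j)) (gpow d0 j')) ck mulA.
  by rewrite !gpowD !mulA.
have nH0 : ~ abelian_set H0.
  move=> ab; apply: nd0; apply: dp1I; apply: conj_comm; apply: ab.
    by exists 0, 1, 0; rewrite gpow1 mul1 mul1r.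
  by exists 1, 0, 0; rewrite gpow1 !mul1r.
have ZH : forall c, C c -> dp c = one -> H0 c.
  by move=> c Cc dc; apply: central_in => //; apply: central_Z.
have [Nd [Nd0 dN]] := Hper d0.
pose LH := flat_map (fun i => flat_map (fun j => map (fun k =>
   gpow x i · gpow d0 j · gpow z0 k) (List.seq 0 p)) (List.seq 0 Nd)) (List.seq 0 q).
have inLH : forall c, C c -> dp c = one -> In c LH.
  move=> c Cc dc; have [i [j [k ->]]] := ZH c Cc dc.
  rewrite (pow_mod i q_gt0 xq) (pow_mod j Nd0 dN) (pow_mod k p_gt0 z0p).
  apply/in_flat_map; exists (i %% q); split; first by apply: In_seq_lt; rewrite ltn_pmod ?q_gt0.
  apply/in_flat_map; exists (j %% Nd); split; first by apply: In_seq_lt; rewrite ltn_pmod.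
  apply/in_map_iff; exists (k %% p); split => //; by apply: In_seq_lt; rewrite ltn_pmod ?p_gt0.
pose f := fun z => epsilon (inhabits one) (fun c => C c /\ dp c = z).
pose LC := flat_map (fun z => map (fun z' => f z · z') LH) LH.
have inLC : forall c, C c -> In c LC.
  move=> c Cc.
  have ex : exists c', C c' /\ dp c' = dp c by exists c.
  have [Cf df] := epsilon_spec (inhabits one) _ ex.
  apply/in_flat_map; exists (dp c); split; first by apply: inLH; [apply: dpC|apply: dd].
  apply/in_map_iff; exists (inv (f (dp c)) · c); split; first by rewrite mulVK.
  apply: inLH; first by apply: subM C_sub _ _ => //; apply: subV C_sub _.
  by rewrite dpCM ?dpCV ?df ?mulVx //; apply: subV C_sub _.
apply: Hinf; exists (flat_map (fun n => map (fun c => gpow g n · c) LC) (List.seq 0 Ng)).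
move=> w _; have [n [d [Dd ->]]] := every_elt w.
rewrite (pow_mod n Ng0 gNg).
apply/in_flat_map; exists (n %% Ng); split; first by apply: In_seq_lt; rewrite ltn_pmod ?Ng0.
apply/in_map_iff; exists d; split => //; apply: inLC; exact: D_C.
Qed.

Lemma Z2 : exists a0, A a0 /\ dp (dp a0) <> one.
Proof.
apply: NNPP => hn; apply: finC => c Cc.
have [k [c1 [c2 [Vc1 [Ac2 ->]]]]] := C_dec Cc.
have Cc1 : C c1 by case: Vc1.
have Cc2 : C c2 by case: Ac2.
rewrite dpCM // dpCM; try (by apply: dpC).
rewrite (alpha Vc1); apply: NNPP => h2; apply: hn; exists c2; split => //.
by move=> h; apply: h2; rewrite h mul1.
Qed.

Lemma Qdec s v : V s v -> exists i w, V s w /\ v = gpow x i · dp w.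
Proof.
move=> Vv; have [a0 [Aa0 na0]] := Z2.
pose K := fun k => exists w a, V s w /\ A a /\ k = dp w · a.
have sK : subgroup K.
  apply: (subgroupP Hper).
    by exists one, one; split; [apply: sub1 (V_sub s)|split; [apply: sub1 A_sub|rewrite dp_one mul1]].
  move=> u u' [w [a [Vw [Aa ->]]]] [w' [a' [Vw' [Aa' ->]]]].
  exists (w · w'), (a · a'); split; first by apply: subM (V_sub s) _ _.
  split; first by apply: subM A_sub _ _.
  have [Cw _] := Vw; have [Cw' _] := Vw'.
  rewrite dpCM // -(mulA (dp w) (dp w')) -(mulA (dp w) a); congr (gmul (dp w) _).
  rewrite (mulA (dp w') a a') (mulA a (dp w') a'); congr (gmul _ a').
  by apply: C_comm; [exact: A_C|exact: dpC].
have KC : forall k, K k -> C k.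
  move=> k [w [a [[Cw _] [Aa ->]]]]; apply: subM C_sub _ _; [exact: dpC|exact: A_C].
have Kx : forall k, K k -> K (gconj k x).
  move=> k [w [a [Vw [Aa ->]]]]; exists (gconj w x), (gconj a x); split; first exact: V_conj.
  by split; [apply: A_conj|rewrite conjM dp_conj].
have Kex : exists k, K k /\ dp k <> one.
  exists a0; split; last by move=> h; apply: na0; rewrite h dp_one.
  exists one, a0; split; first by apply: sub1 (V_sub s).
  by split => //; rewrite dp_one mul1.
have [Cv vQ] := Vv.
have Kv : K (dp v).
  by exists v, one; split => //; split; [apply: sub1 A_sub|rewrite mul1r].
have [i [k [[w [a [Vw [Aa ->]]]] ev]]] := L sK KC Kx Kex Cv Kv.
have [Cw wQ] := Vw.
have Cdw : C (dp w) by apply: dpC.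
have Ca : C a by apply: A_C.
have Cxi : C (gpow x i).
  apply: (subMr C_sub (y := dp w · a)); first by apply: subM C_sub _ _.
  by rewrite -ev.
have a1 : a = one.
  apply: (A_pelt (k := s + e) Aa).
  have ae : a = inv (gpow x i · dp w) · v by rewrite ev (mulA (gpow x i) (dp w) a) mulKV.
  rewrite ae invM.
  have Ci : C (inv (gpow x i)) by apply: subV C_sub _.
  have Cid : C (inv (dp w)) by apply: subV C_sub _.
  rewrite gpowMc; last by apply: C_comm => //; apply: subM C_sub _ _.
  rewrite gpowMc; last by apply: C_comm.
  rewrite !gpow_inv expnD.
  rewrite gpowM -dpCP // wQ dp_one gpow_one inv1 mul1.
  rewrite mulnC gpowM xq_i gpow_one inv1 mul1.
  by rewrite mulnC gpowM vQ gpow_one.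
by exists i, w; split => //; rewrite ev a1 mul1r.
Qed.

Lemma Qp s v : V s v -> exists i, v = gpow x i.
Proof.
move=> Vv; have [i [w [Vw ev]]] := Qdec Vv.
have [j [w' [Vw' ew]]] := Qdec Vw.
exists i; rewrite ev ew.
have [Cw' _] := Vw'.
have Cdw' : C (dp w') by apply: dpC.
have Cxj : C (gpow x j).
  apply: (subMr C_sub (y := dp w')) => //; rewrite -ew; by case: Vw.
by rewrite dpCM // dp_xi (alpha Vw') mul1 mul1r.
Qed.

Lemma conj_x_dp c : gconj c x = inv (dp c) · c.
Proof. by rewrite /dpartial invM invK mulVr. Qed.

Lemma Z3 z : A z -> dp z = one -> z = one.
Proof.
move=> Az dz; have [a0 [Aa0 na0]] := Z2.
pose K := fun k => exists a, A a /\ k = dp a.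
have sK : subgroup K.
  apply: (subgroupP Hper); first by exists one; split; [apply: sub1 A_sub|rewrite dp_one].
  move=> u u' [w [Aw ->]] [w' [Aw' ->]]; exists (w · w'); split; first exact: subM A_sub _ _.
  by rewrite dpCM //; apply: A_C.
have KC : forall k, K k -> C k by move=> k [w [Aw ->]]; apply: dpC; apply: A_C.
have Kx : forall k, K k -> K (gconj k x).
  by move=> k [w [Aw ->]]; exists (gconj w x); split; [apply: A_conj|rewrite dp_conj].
have Kex : exists k, K k /\ dp k <> one by exists (dp a0); split => //; exists a0.
have Kz : K (dp z) by exists one; split; [apply: sub1 A_sub|rewrite dz dp_one].
have [i [k [[a [Aa ->]] ez]]] := L sK KC Kx Kex (A_C Az) Kz.
have Ada : A (dp a) by apply: A_dp.
have xi1 : gpow x i = one.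
  apply: xi_A; apply: (subMr A_sub (y := dp a)) => //; by rewrite -ez.
rewrite ez xi1 mul1 in dz *.
have := dd_pow (A_C Aa) dz; rewrite -(expn1 p) => h.
exact: A_pelt Ada h.
Qed.

Lemma propI : property_I x A.
Proof.
move=> B sB BA dB b Bb.
have BC : forall b, B b -> C b by move=> b' h; apply: A_C; apply: BA.
case: (classic (exists b', B b' /\ dp (dp b') <> one)) => [[b' [Bb' nb']]|hn].
  pose K := fun k => exists b0, B b0 /\ k = dp b0.
  have sK : subgroup K.
    apply: (subgroupP Hper); first by exists one; split; [apply: sub1|rewrite dp_one].
    move=> u u' [w [Bw ->]] [w' [Bw' ->]]; exists (w · w'); split; first exact: subM.
    by rewrite dpCM //; apply: BC.
  have KC : forall k, K k -> C k by move=> k [w [Bw ->]]; apply: dpC; apply: BC.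
  have Kx : forall k, K k -> K (gconj k x).
    move=> k [w [Bw ->]]; exists (gconj w x); split; last by rewrite dp_conj.
    by rewrite conj_x_dp; apply: subM => //; apply: subV => //; apply: dB.
  have Kex : exists k, K k /\ dp k <> one by exists (dp b'); split => //; exists b'.
  have [i [k [[b0 [Bb0 ->]] eb]]] := L sK KC Kx Kex (BC b Bb) (ex_intro _ b (conj Bb erefl)).
  have xi1 : gpow x i = one.
    apply: xi_A; apply: (subMr A_sub (y := dp b0)); first by apply: A_dp; apply: BA.
    by rewrite -eb; apply: BA.
  by exists b0; split => //; rewrite eb xi1 mul1.
have dbp : gpow (dp b) p = one.
  apply: dd_pow; first exact: BC.
  by apply: NNPP => h; apply: hn; exists b.
have db1 : dp b = one by apply: (A_pelt (k := 1)); [apply: A_dp; apply: BA|rewrite expn1].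
have b1 : b = one by apply: Z3 => //; apply: BA.
by exists one; split; [apply: sub1|rewrite dp_one b1].
Qed.

Lemma y_A : A y.
Proof.
split; first by move=> d _; apply: y_central.
by exists r; split; [apply: r_gt0|split; [apply: cop_rp|apply: yr]].
Qed.

Lemma main_ii : exists (x : G) (A : G -> Prop) (p : nat),
     prime p /\
     normal_sub A /\
     (forall g : G, exists c a, cyclic_sub x c /\ A a /\ g = gmul c a) /\
     (forall c, cyclic_sub x c -> A c -> c = gone G) /\
     finite_p_sub p (cyclic_sub x) /\
     abelian_set A /\ p'_sub p A /\
     (forall a, A a -> gconj a (Defs.gpow x p) = a) /\
     property_I x A.
Proof.
exists x, A, p; split; first exact: p_prime.
split; first by split; [exact: A_sub|exact: A_normal].
split.
  move=> w; have [n [d [Dd ->]]] := every_elt w.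
  have [u [v ge]] := g_dec.
  have [k [c1 [c2 [Vc1 [Ac2 ec]]]]] := C_dec (D_C Dd).
  have [j ej] := Qp Vc1.
  set Y := gpow (inv (gpow y v)) n.
  have Yc : forall w, Y · w = w · Y.
    move=> w'; apply: comm_pow; apply: comm_inv; apply: comm_pow; apply: y_central.
  have AY : A Y by apply: subP A_sub _; apply: subV A_sub _; apply: subP A_sub _; apply: y_A.
  have Cxj : C (gpow x j) by rewrite -ej; case: Vc1.
  exists (gpow x (u * n + j)), (Y · c2); split; first by apply/(cyclicP Hper); exists (u * n + j).
  split; first by apply: subM A_sub _ _.
  rewrite ge gpowMc; last by apply: comm_inv; apply: comm_pow; apply: y_central.
  rewrite -/Y ec ej gpowD (gpowM x u n) (C_comm (A_C Ac2) Cxj).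
  by rewrite !mulA (Yc (gpow (gpow x u) n)) -(mulA (gpow (gpow x u) n) Y) (Yc (gpow x j)) !mulA.
split.
  by move=> c /(cyclicP Hper) [i ->]; apply: xi_A.
split.
  split.
    exists (map (fun i => gpow x i) (List.seq 0 q)) => c /(cyclicP Hper) [i ->].
    rewrite (pow_mod i q_gt0 xq); apply/in_map_iff; exists (i %% q); split => //.
    by apply: In_seq_lt; rewrite ltn_pmod ?q_gt0.
  by move=> h /(cyclicP Hper) [i ->]; exists e; apply: xq_i.
split; first exact: A_ab.
split; first by move=> a [_ h].
split; first by move=> a _; apply: conjxp.
exact: propI.
Qed.
End F2.

Theorem theorem3p3 (G : group) :
  infinite_group G -> ~ abelian_set (fun _ : G => True) ->
  soluble G -> periodic G ->
  (in_Yn G <->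
   exists (x : G) (A : G -> Prop) (p : nat),
     prime p /\
     (* semidirect product G = <x> |x A *)
     normal_sub A /\
     (forall g : G, exists c a, cyclic_sub x c /\ A a /\ g = gmul c a) /\
     (forall c, cyclic_sub x c -> A c -> c = gone G) /\
     finite_p_sub p (cyclic_sub x) /\
     abelian_set A /\ p'_sub p A /\
     (forall a, A a -> gconj a (gpow x p) = a) /\
     property_I x A).
Proof.
move=> Hinf Hnab Hsol Hper; split.
- move=> HY.
  case: (classic (forall g d, D (G:=G) d -> gmul g d = gmul d g)) => [h|h].
    by exfalso; exact: (caseI Hinf Hnab Hper HY h).
  have [g [d0 [Dd0 ngd]]] : exists g d0, D (G:=G) d0 /\ gmul g d0 <> gmul d0 g.
    apply: NNPP => hn; apply: h => g d Dd; apply: NNPP => h'; apply: hn.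
    by exists g, d.
  exact: (main_ii Hinf Hnab Hsol Hper HY Dd0 ngd).
- move=> [x [A [p [pr [nA [dec [triv [fp [abA [p' [xp PI]]]]]]]]]]].
  exact: (converse Hper pr nA dec triv fp abA xp PI).
Qed.
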